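(* Let $f:2^{\mathcal N}\to\mathbb R_{\ge0}$ be non-negative submodular, and let $\mathcal N$ be partitioned into non-empty parts $P_1,\dots,P_k$, each containing a dummy element $d_j\in P_j$ with $f(S)=f(S\setminus\{d_1,\dots,d_k\})$ for all $S$. Consider the Smooth Residual Random Greedy algorithm with parameter $T$: $S_0=\emptyset$; for $i=1,\dots,T$, set $S_i=S_{i-1}$, let $M_i$ consist of, for each $j\in I(S_{i-1})$, one element of $P_j$ maximizing $f(S_{i-1}\cup\{u\})-f(S_{i-1})$ over $u\in P_j$; pick $j$ uniformly at random from $\{1,\dots,k\}$ and, if $j\in I(S_{i-1})$, let $u_i$ be the element of $M_i$ in $P_j$ and set $S_i=S_{i-1}\cup\{u_i\}$. Then for every $i=1,\dots,T$, $$\mathbb E[f(O_{S_i}\cup S_i)]\ge\Big(1-\frac2k\Big)\mathbb E[f(O_{S_{i-1}}\cup S_{i-1})]+\frac1k\,\mathbb E[f(S_{i-1})].$$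
   Context: A set function $f$ is submodular if $f(A\cup B)+f(A\cap B)\le f(A)+f(B)$ for all $A,B\subseteq\mathcal N$. The partition matroid has independent sets $\mathcal I=\{S\subseteq\mathcal N: |S\cap P_j|\le1\ \forall j\}$. For $S\subseteq\mathcal N$, $I(S)=\{j: P_j\cap S=\emptyset\}$. For $S\in\mathcal I$, $O_S$ denotes a fixed set $A\subseteq\mathcal N\setminus S$ maximizing $f(S\cup A)$ subject to $S\cup A\in\mathcal I$, chosen (possible thanks to the dummy elements) with $|O_S|=k-|S|$, i.e., containing exactly one element from each part $P_j$, $j\in I(S)$. *)

(* Defs.v *)
From HB Require Import structures.
From mathcomp Require Import all_boot all_order all_algebra.
Set Implicit Arguments. Unset Strict Implicit. Unset Printing Implicit Defensive.
Import Order.TTheory GRing.Theory Num.Theory.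
Local Open Scope ring_scope.

(* Ground set N = the finite type T.  The partition P_1..P_k is given by
   a map part : T -> 'I_k (P_j = elements whose part is j). *)
Section Defs.
Variables (R : realFieldType) (T : finType) (k : nat) (part : T -> 'I_k).

Definition P (j : 'I_k) : {set T} := [set x | part x == j].

Definition submodular (f : {set T} -> R) : Prop :=
  forall A B : {set T}, f (A :|: B) + f (A :&: B) <= f A + f B.

Definition indep (S : {set T}) : bool := [forall j, #|S :&: P j| <= 1]%N.

Definition Iset (S : {set T}) : {set 'I_k} := [set j | P j :&: S == set0].

Definition is_OS (f : {set T} -> R) (S A : {set T}) : Prop :=
  [/\ [disjoint A & S], indep (S :|: A),
      (forall B : {set T}, [disjoint B & S] -> indep (S :|: B) ->
          f (S :|: B) <= f (S :|: A)),
      #|A| = (k - #|S|)%N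
    & forall j, j \in Iset S -> #|A :&: P j| = 1%N].

(* sel i S j : the element of M_i lying in P_j (tie-breaking may depend on the
   step i and the current set S). One step of the algorithm with the random
   index j: *)
Definition step (sel : nat -> {set T} -> 'I_k -> T) (i : nat) (S : {set T})
  (j : 'I_k) : {set T} :=
  if j \in Iset S then S :|: [set sel i S j] else S.

Fixpoint run (sel : nat -> {set T} -> 'I_k -> T) (i : nat) (S : {set T})
  (js : seq 'I_k) : {set T} :=
  match js with
  | [::] => S
  | j :: js' => run sel i.+1 (step sel i S j) js'
  end.

(* S_i as a function of the i independent uniform choices j_1..j_i *)
Definition S_alg sel (js : seq 'I_k) : {set T} := run sel 1 set0 js.

Definition Exp sel (i : nat) (g : {set T} -> R) : R :=
  (\sum_(js : i.-tuple 'I_k) g (S_alg sel js)) / (k%:R ^+ i).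

End Defs.

(* Main.v *)
Require Import Defs.
From HB Require Import structures.
From mathcomp Require Import all_boot all_order all_algebra.
From mathcomp Require Import lra zify ring.
Set Implicit Arguments. Unset Strict Implicit. Unset Printing Implicit Defensive.
Import Order.TTheory GRing.Theory Num.Theory.
Local Open Scope ring_scope.

Lemma key (R : realFieldType) (a b c fc fs K M : R) : -fc <= a -> fs - fc <= b -> a + b + fc*M <= c -> (K-2)*fc + fs <= c + fc*(K - M).
Proof. move=> h1 h2 h3. rewrite mulrBr mulrBl. move: (fc * M) (fc * K) (K * fc) (mulrC K fc) h3 => x y z -> h3. lra. Qed.

Section Aux.
Variables (R : realFieldType) (T : finType) (k : nat) (part : T -> 'I_k).

Lemma sub_sum (g : {set T} -> R) (C X : {set T}) :
  submodular g ->
  g (C :|: X) - g C <= \sum_(x in X) (g (C :|: [set x]) - g C).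
Proof.
move=> sm; move Hn: #|X| => n; elim: n X Hn => [|n IH] X Hn.
  move/eqP: Hn; rewrite cards_eq0 => /eqP ->.
  by rewrite setU0 subrr big_set0.
have: (0 < #|X|)%N by rewrite Hn.
rewrite card_gt0 => /set0Pn [x xX].
rewrite (big_setD1 x xX) /=.
have H1 : #|X :\ x| = n by move: Hn; rewrite (cardsD1 x X) xX add1n => -[].
have := IH _ H1.
have := sm (C :|: [set x]) (C :|: (X :\ x)).
have E1 : C :|: [set x] :|: (C :|: X :\ x) = C :|: X.
  apply/setP => z; rewrite !inE; case: (eqVneq z x) => [->|]; rewrite ?xX /=.
    by rewrite orbT.
  by rewrite /= orbF; case: (z \in C).
have E2 : (C :|: [set x]) :&: (C :|: X :\ x) = C.
  apply/setP => z; rewrite !inE; case: (eqVneq z x) => [->|] /=.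
    by case: (x \in C).
  by rewrite orbF; case: (z \in C).
rewrite E1 E2 => h1 h2. lra.
Qed.

Lemma le1_eq (A : {set T}) x y : (#|A| <= 1)%N -> x \in A -> y \in A -> x = y.
Proof. by move/card_le1_eqP => h xA yA; apply: h. Qed.

Lemma indep_sub (A B : {set T}) : A \subset B -> indep part B -> indep part A.
Proof.
move=> sAB /forallP h; apply/forallP => j.
apply: leq_trans (h j); apply: subset_leq_card; exact: setSI.
Qed.

Lemma indep_add (S : {set T}) j u : indep part S -> j \in Iset part S ->
  u \in P part j -> indep part (S :|: [set u]).
Proof.
move=> /forallP h; rewrite /Iset inE => /eqP hI; rewrite /P inE => /eqP pu.
apply/forallP => j'.
case: (eqVneq j' j) => [->|ne].
  rewrite -(cards1 u); apply: subset_leq_card.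
  apply/subsetP => z; rewrite !inE => /andP [/orP [zS|->//] pz].
  have : z \in P part j :&: S by rewrite !inE pz zS.
  by rewrite hI inE.
apply: leq_trans (h j'); apply: subset_leq_card.
apply/subsetP => z; rewrite !inE => /andP [/orP [zS|/eqP zu] pz].
  by rewrite zS pz.
by move: pz; rewrite zu pu eq_sym (negbTE ne).
Qed.


Lemma pointwise (f : {set T} -> R) (O : {set T} -> {set T})
  (sel : nat -> {set T} -> 'I_k -> T) (t : nat) (S : {set T}) :
  (forall S, 0 <= f S) -> submodular f ->
  (forall S : {set T}, indep part S -> is_OS part f S (O S)) ->
  (forall (S : {set T}) (j : 'I_k), j \in Iset part S -> sel t S j \in P part j) ->
  indep part S ->
  (k%:R - 2) * f (O S :|: S) + f S <=
  \sum_(j : 'I_k) f (O (step part sel t S j) :|: step part sel t S j).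
Proof.
move=> f0 sm hO hsel iS.
have [dOS iSO opt cardO oneO] := hO S iS.
set O0 := O S in dOS iSO opt cardO oneO *.
set C := O0 :|: S.
have xnS : forall x, x \in O0 -> (x \in S) = false.
  by move=> x xO; apply: disjointFr dOS xO.
have inj : {in O0 &, injective part}.
  move=> x y xO yO pxy.
  apply: (@le1_eq ((S :|: O0) :&: P part (part x))).
    by move/forallP: iSO.
  by rewrite !inE xO orbT eqxx.
  by rewrite !inE yO orbT pxy eqxx.
have inI : forall x, x \in O0 -> part x \in Iset part S.
  move=> x xO; rewrite inE; apply/eqP/setP => z; rewrite !inE.
  apply/negbTE/negP => /andP [/eqP pz zS].
  have zx : z = x.
    apply: (@le1_eq ((S :|: O0) :&: P part (part x))).
      by move/forallP: iSO.
    by rewrite !inE zS pz eqxx.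
    by rewrite !inE xO orbT eqxx.
  by move: zS; rewrite zx xnS.
have Iim : Iset part S = part @: O0.
  apply/setP => j; apply/idP/imsetP.
    move=> jI; have : (0 < #|O0 :&: P part j|)%N by rewrite oneO.
    rewrite card_gt0 => /set0Pn [x]; rewrite !inE => /andP [xO /eqP px].
    by exists x.
  by move=> [x xO ->]; apply: inI.
have cardI : #|Iset part S| = #|O0| by rewrite Iim card_in_imset.
pose u x := sel t S (part x).
have bound : forall x, x \in O0 ->
  f (C :|: [set u x]) + f (C :\ x) - f C <=
  f (O (step part sel t S (part x)) :|: step part sel t S (part x)).
  move=> x xO; have jI := inI x xO.
  rewrite /step jI.
  have uP : u x \in P part (part x) by apply: hsel.
  have pu : part (u x) = part x by move: uP; rewrite inE => /eqP.
  have iS' := indep_add iS jI uP.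
  have [_ _ opt' _ _] := hO _ iS'.
  set S' := S :|: [set u x] in iS' opt' *.
  set B := O0 :\ x.
  have dB : [disjoint B & S'].
    rewrite disjoint_subset; apply/subsetP => z; rewrite !inE => /andP [zx zO].
    apply/negP => /orP [zS | /eqP zu]; first by move: zS; rewrite xnS.
    by move/eqP: zx; apply; apply: inj => //; rewrite -pu zu.
  have iB : indep part (S' :|: B).
    have -> : S' :|: B = (S :|: B) :|: [set u x] by rewrite /S' setUAC.
    apply: (indep_add _ _ uP).
      apply: indep_sub iSO; apply: setUS; exact: subsetDl.
    rewrite inE; apply/eqP/setP => z; rewrite !inE.
    apply/negbTE/negP => /andP [/eqP pz /orP [zS | /andP [zx zO]]].
      by move: (inI x xO); rewrite inE => /eqP /setP /(_ z); rewrite !inE pz eqxx zS.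
    by move/eqP: zx; apply; apply: inj.
  have := opt' B dB iB; rewrite [X in _ <= f X]setUC => h; apply: le_trans h.
  have optx : f (C :\ x) <= f C.
    have dx : [disjoint O0 :\ x & S].
      rewrite disjoint_subset; apply/subsetP => z; rewrite !inE => /andP [_ zO].
      by rewrite xnS.
    have ix : indep part (S :|: (O0 :\ x)).
      apply: indep_sub iSO; apply: setUS; exact: subsetDl.
    have := opt _ dx ix.
    have -> : S :|: (O0 :\ x) = C :\ x.
      apply/setP => z; rewrite !inE; case: (eqVneq z x) => [->|] /=.
        by rewrite xnS.
      by rewrite orbC.
    by rewrite setUC.
  case: (eqVneq (u x) x) => [ux|ux].
    have E1 : S' :|: B = C.
      apply/setP => z; rewrite !inE ux; case: (eqVneq z x) => [->|] /=.
        by rewrite xO orbT.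
      by rewrite orbF orbC.
    have E2 : C :|: [set u x] = C.
      apply/setP => z; rewrite !inE ux; case: (eqVneq z x) => [->|] /=.
        by rewrite xO orbT.
      by rewrite orbF.
    rewrite E1 E2; lra.
  have := sm (S' :|: B) C.
  have E1 : S' :|: B :|: C = C :|: [set u x].
    apply/setP => z; rewrite !inE; case: (eqVneq z x) => [->|] /=.
      by rewrite xO !orbT.
    by case: (z \in S); case: (z \in O0); case: (z == u x).
  have E2 : (S' :|: B) :&: C = C :\ x.
    apply/setP => z; rewrite !inE; case: (eqVneq z x) => [->|zx] /=.
      by rewrite xnS // eq_sym (negbTE ux).
    case: (eqVneq z (u x)) => [zu|] /=; last by rewrite orbF; case: (z \in S); case: (z \in O0).
    by rewrite orbT.
  rewrite E1 E2 => h; lra.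
have pux : forall x, x \in O0 -> part (u x) = part x.
  by move=> x xO; move: (hsel _ _ (inI x xO)); rewrite inE => /eqP.
have uinj : {in O0 &, injective u}.
  by move=> x y xO yO uxy; apply: inj => //; rewrite -pux // uxy pux.
have L1 : - f C <= \sum_(x in O0) (f (C :|: [set u x]) - f C).
  have := sub_sum C (u @: O0) sm; rewrite big_imset //=.
  have := f0 (C :|: u @: O0); lra.
have L2 : f S - f C <= \sum_(x in O0) (f (C :\ x) - f C).
  pose g Y := f (C :\: Y).
  have smg : submodular g.
    move=> A B'; rewrite /g setDUr setDIr; have := sm (C :\: A) (C :\: B'); lra.
  have := sub_sum set0 O0 smg.
  have -> : \sum_(x in O0) (g (set0 :|: [set x]) - g set0) =
            \sum_(x in O0) (f (C :\ x) - f C).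
    by apply: eq_bigr => x _; rewrite /g set0U setD0.
  have -> : g (set0 :|: O0) = f S.
    rewrite /g set0U /C setDUl setDv set0U; congr f; apply/setDidPl.
    by rewrite disjoint_sym.
  by rewrite /g setD0.
rewrite (bigID (fun j => j \in Iset part S)) /=.
have E3 : \sum_(j | j \in Iset part S)
    f (O (step part sel t S j) :|: step part sel t S j) =
  \sum_(x in O0) f (O (step part sel t S (part x)) :|: step part sel t S (part x)).
  by rewrite Iim big_imset.
have cC : #|~: Iset part S| = (k - #|O0|)%N.
  by have h := cardsC (Iset part S); rewrite card_ord cardI in h; lia.
have E4 : \sum_(j | ~~ (j \in Iset part S))
    f (O (step part sel t S j) :|: step part sel t S j) = f C *+ (k - #|O0|).
  rewrite (eq_bigr (fun _ => f C)); last first.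
    by move=> j /negbTE jI; rewrite /step jI.
  rewrite (eq_bigl [in ~: Iset part S]); last by move=> j; rewrite in_setC.
  by rewrite sumr_const cC.
have bsum : \sum_(x in O0) (f (C :|: [set u x]) - f C) +
    \sum_(x in O0) (f (C :\ x) - f C) + f C *+ #|O0| <=
  \sum_(x in O0) f (O (step part sel t S (part x)) :|: step part sel t S (part x)).
  rewrite -sumr_const -!big_split /=; apply: ler_sum => x xO.
  have := bound x xO; lra.
have mk : (#|O0| <= k)%N by have := max_card (mem (Iset part S)); rewrite card_ord -cardI.
rewrite E3 E4 -[f C *+ _]mulr_natr natrB //; rewrite -[f C *+ _]mulr_natr in bsum.
move: L1 L2 bsum; apply: key.
Qed.

End Aux.
Lemma sum_tuple_rcons (R : realFieldType) (A : finType) n (F : n.+1.-tuple A -> R) :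
  \sum_(t : n.+1.-tuple A) F t = \sum_(t : n.-tuple A) \sum_(j : A) F [tuple of rcons t j].
Proof.
rewrite pair_bigA /=.
pose h (p : n.-tuple A * A) : n.+1.-tuple A := [tuple of rcons p.1 p.2].
pose g (t : n.+1.-tuple A) : n.-tuple A * A :=
  ([tuple of belast (thead t) (behead t)], last (thead t) (behead t)).
rewrite (reindex h) //=.
exists g => [[t j] _ | t _].
  rewrite /g /h /=; congr (_, _).
    apply: val_inj => /=; case: t => [[|x s] st] //=.
    by rewrite belast_rcons.
  case: t => [[|x s] st] //=; by rewrite last_rcons.
apply: val_inj => /=.
case: t => [[|x s] st] //=.
by rewrite -lastI.
Qed.

Lemma run_rcons (T : finType) (k : nat) (part : T -> 'I_k) sel i S s j :
  run part sel i S (rcons s j) = step part sel (i + size s) (run part sel i S s) j.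
Proof.
elim: s i S => [|x s IH] i S /=; first by rewrite addn0.
by rewrite IH addSnnS.
Qed.

Lemma run_indep (T : finType) (k : nat) (part : T -> 'I_k) sel i S s :
  (forall t S j, j \in Iset part S -> sel t S j \in P part j) ->
  indep part S -> indep part (run part sel i S s).
Proof.
move=> hs; elim: s i S => [|x s IH] i S //= iS.
apply: IH; rewrite /step; case: ifP => // xI.
exact: (indep_add iS xI (hs _ _ _ xI)).
Qed.

Theorem lemma8 (R : realFieldType) (T : finType) (k : nat) (part : T -> 'I_k)
  (f : {set T} -> R) (d : 'I_k -> T)
  (O : {set T} -> {set T}) (sel : nat -> {set T} -> 'I_k -> T) (Tn i : nat) :
  (0 < k)%N ->
  (forall S, 0 <= f S) ->
  submodular f ->
  (forall j, part (d j) = j) ->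
  (forall S : {set T}, f S = f (S :\: [set d j | j : 'I_k])) ->
  (forall S : {set T}, indep part S -> is_OS part f S (O S)) ->
  (forall (t : nat) (S : {set T}) (j : 'I_k), j \in Iset part S ->
     sel t S j \in P part j /\
     (forall u, u \in P part j ->
        f (S :|: [set u]) - f S <= f (S :|: [set sel t S j]) - f S)) ->
  (1 <= i <= Tn)%N ->
  Exp part sel i (fun S => f (O S :|: S)) >=
    (1 - 2 / k%:R) * Exp part sel i.-1 (fun S => f (O S :|: S))
    + 1 / k%:R * Exp part sel i.-1 f.
Proof.
move=> k0 f0 sm _ _ hO hsel /andP [i1 _].
have hs : forall t S j, j \in Iset part S -> sel t S j \in P part j.
  by move=> t S j jI; case: (hsel t S j jI).
case: i i1 => [//|n] _ /=.
rewrite /Exp sum_tuple_rcons.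
set A := \sum_(t : n.-tuple 'I_k) f (O (S_alg part sel t) :|: S_alg part sel t).
set B := \sum_(t : n.-tuple 'I_k) f (S_alg part sel t).
have Hsum : (k%:R - 2) * A + B <= \sum_(t : n.-tuple 'I_k) \sum_(j : 'I_k)
    f (O (S_alg part sel [tuple of rcons t j]) :|: S_alg part sel [tuple of rcons t j]).
  rewrite /A /B mulr_sumr -big_split /=; apply: ler_sum => t _.
  rewrite (eq_bigr (fun j => f (O (step part sel n.+1 (S_alg part sel t) j)
                              :|: step part sel n.+1 (S_alg part sel t) j))); last first.
    by move=> j _; rewrite /S_alg /= run_rcons size_tuple add1n.
  apply: (@pointwise R T k part f O sel n.+1 (S_alg part sel t)) => //; first by move=> S j; apply: hs.
  apply: run_indep => //.
  by apply/forallP => j; rewrite set0I cards0.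
have kn0 : (k%:R : R) != 0 by rewrite pnatr_eq0 -lt0n.
apply: le_trans (_ : ((k%:R - 2) * A + B) / k%:R ^+ n.+1 <= _); last first.
  apply: ler_wpM2r => //; rewrite invr_ge0 exprn_ge0 // ler0n //.
rewrite le_eqVlt; apply/orP; left; apply/eqP.
rewrite exprS; field.
by rewrite kn0 expf_neq0.
Qed.
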